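(* Let $G$ be a group with finite generating sets $S$ and $T$ (neither containing the identity), and let $d_S$ and $d_T$ be the cardinal metrics on $G$ induced by $S$ and $T$, respectively. Then every injective map $f\colon G\to G$ is bi-Lipschitz as a map $(G,d_T)\to(G,d_S)$, i.e. there is a constant $K\ge 1$ with $\frac1K d_T(g,h)\le d_S(f(g),f(h))\le K d_T(g,h)$ for all $g,h\in G$. In particular, every permutation of $G$ is a bi-Lipschitz equivalence, and so $(G,d_S)$ and $(G,d_T)$ are bi-Lipschitz equivalent.
   Context: For a generating set $U$ of $G$ (not containing the identity), the cardinal norm is $\|g\|_U = \min\{|A| : A\subseteq U,\ g\in\langle A\rangle\}$, where $\langle A\rangle$ is the subgroup generated by $A$, and the cardinal metric induced by $U$ is $d_U(g,h)=\|g^{-1}h\|_U$. *)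

(* Defs.v *)
From Stdlib Require Import Reals List ClassicalEpsilon.
Import ListNotations.

Record group := Group {
  gcar :> Type;
  gmul : gcar -> gcar -> gcar;
  ginv : gcar -> gcar;
  gone : gcar;
  gmulA : forall x y z, gmul x (gmul y z) = gmul (gmul x y) z;
  gmul1g : forall x, gmul gone x = x;
  gmulVg : forall x, gmul (ginv x) x = gone
}.

Arguments gmul {g}.
Arguments ginv {g}.
Arguments gone {g}.

Inductive gen {G : group} (A : list G) : G -> Prop :=
| gen_one : gen A gone
| gen_in : forall a, In a A -> gen A a
| gen_mul : forall x y, gen A x -> gen A y -> gen A (gmul x y)
| gen_inv : forall x, gen A x -> gen A (ginv x).

Definition finite_gen_set (G : group) (U : list G) : Prop :=
  NoDup U /\ ~ In gone U /\ forall g : G, gen U g.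

Definition norm_witness {G : group} (U : list G) (g : G) (n : nat) : Prop :=
  exists A : list G, NoDup A /\ incl A U /\ length A = n /\ gen A g.

Definition cnorm {G : group} (U : list G) (g : G) : nat :=
  epsilon (inhabits 0%nat)
    (fun n => norm_witness U g n /\ forall m, norm_witness U g m -> (n <= m)%nat).

Definition cdist {G : group} (U : list G) (g h : G) : nat :=
  cnorm U (gmul (ginv g) h).

(* Main.v *)
Require Import Defs.
From Stdlib Require Import Reals List.
From Stdlib Require Import Classical ClassicalEpsilon Lia Lra Wf_nat.
Import ListNotations.
Open Scope R_scope.

Lemma min_exists (P : nat -> Prop) n : P n ->
  exists m, P m /\ forall k, P k -> (m <= k)%nat.
Proof.
  intro Hn.
  destruct (dec_inh_nat_subset_has_unique_least_element P
    (fun k => classic (P k)) (ex_intro _ n Hn)) as [m [[Hm Hl] _]].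
  exists m; split; auto.
Qed.

Lemma cnorm_spec {G : group} (U : list G) (g : G) :
  (exists n, norm_witness U g n) ->
  norm_witness U g (cnorm U g) /\ forall m, norm_witness U g m -> (cnorm U g <= m)%nat.
Proof.
  intros [n Hn]. unfold cnorm. apply epsilon_spec.
  apply (min_exists _ n Hn).
Qed.

Lemma mulgV {G : group} (x : G) : gmul x (ginv x) = gone.
Proof.
  set (y := ginv x).
  rewrite <- (gmul1g G (gmul x y)).
  rewrite <- (gmulVg G y) at 1.
  rewrite <- gmulA. rewrite (gmulA G y x y). unfold y at 2.
  rewrite gmulVg, gmul1g. apply gmulVg.
Qed.

Lemma mulg1 {G : group} (x : G) : gmul x gone = x.
Proof.
  rewrite <- (gmulVg G x), gmulA, mulgV. apply gmul1g.
Qed.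

Lemma gen_nil {G : group} (x : G) : gen [] x -> x = gone.
Proof.
  induction 1.
  - reflexivity.
  - destruct H.
  - subst. apply gmul1g.
  - subst. rewrite <- (mulg1 (ginv gone)). apply gmulVg.
Qed.

Lemma gen_witness {G : group} (U : list G) g :
  finite_gen_set G U -> norm_witness U g (length U).
Proof.
  intros [H1 [H2 H3]]. exists U. repeat split; auto. apply incl_refl.
Qed.

Lemma cnorm_le {G : group} (U : list G) g :
  finite_gen_set G U -> (cnorm U g <= length U)%nat.
Proof.
  intro H. pose proof (gen_witness U g H) as W.
  apply (cnorm_spec U g (ex_intro _ _ W)). exact W.
Qed.

Lemma cnorm_0 {G : group} (U : list G) g :
  finite_gen_set G U -> cnorm U g = 0%nat -> g = gone.
Proof.
  intros H E. pose proof (gen_witness U g H) as W.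
  destruct (cnorm_spec U g (ex_intro _ _ W)) as [[A [_ [_ [L Hg]]]] _].
  rewrite E in L. destruct A; [|discriminate]. apply gen_nil; auto.
Qed.

Lemma cnorm_one {G : group} (U : list G) :
  finite_gen_set G U -> cnorm U gone = 0%nat.
Proof.
  intros H. pose proof (gen_witness U gone H) as W.
  destruct (cnorm_spec U gone (ex_intro _ _ W)) as [_ M].
  assert (norm_witness U gone 0) as W0.
  { exists []. repeat split; auto. constructor. intros a []. constructor. }
  specialize (M 0%nat W0). lia.
Qed.

Lemma cdist_0 {G : group} (U : list G) g h :
  finite_gen_set G U -> cdist U g h = 0%nat -> g = h.
Proof.
  intros H E. apply cnorm_0 in E; auto.
  rewrite <- (mulg1 g), <- E, gmulA, mulgV. apply gmul1g.
Qed.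

Theorem mainTheorem4 (G : group) (S T : list G) :
  finite_gen_set G S -> finite_gen_set G T ->
  forall f : G -> G, (forall x y, f x = f y -> x = y) ->
  exists K : R, 1 <= K /\
    forall g h : G,
      / K * INR (cdist T g h) <= INR (cdist S (f g) (f h)) /\
      INR (cdist S (f g) (f h)) <= K * INR (cdist T g h).
Proof.
  intros HS HT f Hf.
  exists (INR (length S + length T + 1)).
  assert (1 <= INR (length S + length T + 1)) as K1.
  { replace 1 with (INR 1) by reflexivity. apply le_INR. lia. }
  split; auto.
  intros g h.
  destruct (classic (g = h)) as [E|E].
  - subst. unfold cdist. rewrite !gmulVg, !cnorm_one by auto. simpl. lra.
  - assert (cdist T g h <> 0%nat) as A by (intro X; apply E; apply (cdist_0 T); auto).
    assert (cdist S (f g) (f h) <> 0%nat) as B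
      by (intro X; apply E; apply Hf; apply (cdist_0 S); auto).
    pose proof (cnorm_le T (gmul (ginv g) h) HT) as CT.
    pose proof (cnorm_le S (gmul (ginv (f g)) (f h)) HS) as CS.
    unfold cdist in *.
    set (a := cnorm T (gmul (ginv g) h)) in *.
    set (b := cnorm S (gmul (ginv (f g)) (f h))) in *.
    set (K := INR (length S + length T + 1)) in *.
    assert (INR a <= K) by (apply le_INR; lia).
    assert (INR b <= K) by (apply le_INR; lia).
    assert (1 <= INR a) by (replace 1 with (INR 1) by reflexivity; apply le_INR; lia).
    assert (1 <= INR b) by (replace 1 with (INR 1) by reflexivity; apply le_INR; lia).
    split.
    + apply Rle_trans with 1; [|lra].
      apply Rmult_le_reg_l with K; [lra|].
      rewrite <- Rmult_assoc, Rinv_r by lra. lra.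
    + nra.
Qed.
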